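(* Let $r>1$ and integer $K\ge2$. Let $\gamma^*(r,K,1)$ be the supremum of $\sum_{i=1}^{K-1}\frac{p^i}{\sum_{j=i}^Kp^j}$ over all $p=(p^1,\dots,p^K)$ with $p^K=1/r$, $\sum_ip^i=1$, $p^i>0$. Then $$\gamma^*(r,K,1)=(K-1)\left(1-r^{-\frac{1}{K-1}}\right),$$ and $\eta(r,K,1)=\gamma^*(r,K,1)/(1+\gamma^*(r,K,1))$.
   Context: Single item auction with one buyer whose value takes values $0<x^1<\dots<x^K$ with probabilities $p^i>0$, $\sum_ip^i=1$. Let $t(x,p)=\max\{i: i\in\arg\max_{1\le k\le K}x^k\sum_{j=k}^Kp^j\}$ (the index of the optimal posted price). The efficiency loss ratio of the revenue-optimal auction is $\mathrm{ELR}_1(x,p)=\sum_{i=1}^{t(x,p)-1}p^ix^i/\sum_{i=1}^Kp^ix^i$. $\eta(r,K,1)$ is the supremum of $\mathrm{ELR}_1(x,p)$ over all such $p$ and all $x$ with $0<x^1<\dots<x^K\le rx^1$. *)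

(* Defs.v *)
From HB Require Import structures.
From mathcomp Require Import all_boot all_order all_algebra.
From mathcomp Require Import all_classical all_reals all_analysis.
Set Implicit Arguments. Unset Strict Implicit. Unset Printing Implicit Defensive.
Import Order.TTheory GRing.Theory Num.Theory.
Local Open Scope classical_set_scope.
Local Open Scope ring_scope.

Section Defs.
Variable R : realType.

Definition is_sup (S : set R) (v : R) : Prop :=
  ubound S v /\ (forall u, ubound S u -> v <= u).

Definition revenue (K : nat) (x p : nat -> R) (k : nat) : R :=
  x k * \sum_(k <= j < K.+1) p j.

Definition t_opt (K : nat) (x p : nat -> R) : nat :=
  \max_(1 <= i < K.+1 | all (fun k => revenue K x p k <= revenue K x p i) (iota 1 K)) i.

Definition ELR1 (K : nat) (x p : nat -> R) : R :=
  (\sum_(1 <= i < t_opt K x p) p i * x i) / (\sum_(1 <= i < K.+1) p i * x i).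

Definition prob_vec (K : nat) (p : nat -> R) : Prop :=
  (forall i, (1 <= i <= K)%N -> 0 < p i) /\ \sum_(1 <= i < K.+1) p i = 1.

Definition values_ok (r : R) (K : nat) (x : nat -> R) : Prop :=
  0 < x 1%N /\ (forall i, (1 <= i < K)%N -> x i < x i.+1) /\ x K <= r * x 1%N.

(* the set whose supremum is eta(r,K,1) *)
Definition eta_set (r : R) (K : nat) : set R :=
  [set e | exists x p : nat -> R, values_ok r K x /\ prob_vec K p /\ e = ELR1 K x p].

Definition gamma_set (r : R) (K : nat) : set R :=
  [set g | exists p : nat -> R, prob_vec K p /\ p K = r^-1 /\
     g = \sum_(1 <= i < K) p i / \sum_(i <= j < K.+1) p j].

End Defs.

(* Main.v *)
Require Import Defs.
From HB Require Import structures.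
From mathcomp Require Import all_boot all_order all_algebra.
From mathcomp Require Import all_classical all_reals all_analysis.
From mathcomp Require Import ring lra zify.
From Stdlib Require Import Lia.
Import Order.TTheory GRing.Theory Num.Theory.
Local Open Scope ring_scope.

Section H.
Variable R : realType.

Lemma amgm n (f : nat -> R) : (0 < n)%N -> (forall i, (i < n)%N -> 0 <= f i) ->
  \prod_(0 <= i < n) f i <= ((\sum_(0 <= i < n) f i) / n%:R) ^+ n.
Proof.
move=> n0 hf; rewrite !big_mkord.
have := (leif_AGM (A := predT) (E := fun i : 'I_n => f i) _).1.
rewrite card_ord; apply => // i _; exact: hf.
Qed.

Lemma qpow (r : R) n : 1 < r -> (0 < n)%N -> (r `^ (- (n%:R)^-1)) ^+ n = r^-1.
Proof.
move=> r1 n0; have r0 : 0 <= r by lra.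
rewrite -powR_mulrn ?powR_ge0 // -powRrM mulNr mulVf ?pnatr_eq0 -?lt0n //.
by rewrite powR_inv1.
Qed.

Lemma qprop (r : R) n : 1 < r -> (0 < n)%N ->
  0 < r `^ (- (n%:R)^-1) < 1.
Proof.
move=> r1 n0; rewrite powR_gt0 /=; last lra.
set q := r `^ _; rewrite ltNge; apply/negP => q1.
have : 1 <= q ^+ n by rewrite exprn_ege1.
rewrite qpow // => h.
have : r^-1 < 1 by rewrite invf_lt1 //; lra.
lra.
Qed.


Definition gam (r : R) K := (K.-1)%:R * (1 - r `^ (- ((K.-1)%:R)^-1)).

Lemma sum_ge0_nat (p : nat -> R) m n : (forall j, (m <= j < n)%N -> 0 <= p j) ->
  0 <= \sum_(m <= j < n) p j.
Proof.
move=> h; rewrite big_nat_cond; apply: sumr_ge0 => j /andP[hj _]; exact: h.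
Qed.

Lemma core (r : R) K t (p : nat -> R) :
  1 < r -> (2 <= K)%N -> (1 <= t <= K)%N ->
  (forall i, (1 <= i <= K)%N -> 0 < p i) -> \sum_(1 <= i < K.+1) p i = 1 ->
  r^-1 <= \sum_(t <= j < K.+1) p j ->
  \sum_(1 <= i < t) p i / \sum_(i <= j < K.+1) p j <= gam r K.
Proof.
move=> r1 K2 /andP[t1 tK] pp S1 St.
set S := fun i => \sum_(i <= j < K.+1) p j.
have Sstep i : (i <= K)%N -> S i = p i + S i.+1 by move=> iK; rewrite /S big_ltn.
have Spos i : (1 <= i <= K)%N -> 0 < S i.
  move=> /andP[i1 iK]; rewrite Sstep //.
  have : 0 <= S i.+1 by apply: sum_ge0_nat => j /andP[h1 h2]; apply/ltW/pp; lia.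
  have := pp i; rewrite i1 iK => /(_ isT); lra.
set f := fun i => if (i < t)%N then S i.+1 / S i else 1.
have fge0 i : (1 <= i < K)%N -> 0 <= f i.
  move=> /andP[i1 iK]; rewrite /f; case: ifP => it //.
  by rewrite divr_ge0 // ltW // Spos //; lia.
have lhs : \sum_(1 <= i < t) p i / S i = \sum_(1 <= i < K) (1 - f i).
  rewrite [RHS](@big_cat_nat _ _ _ t 1 K) //=.
  have -> : \sum_(t <= i < K) (1 - f i) = 0.
    by rewrite big_nat_cond big1 // => i /andP[/andP[it _] _]; rewrite /f ltnNge it /= subrr.
  rewrite addr0.
  apply: eq_big_nat => i /andP[i1 it]; rewrite /f it.
  have Si := Spos i; rewrite Sstep; last lia.
  have : S i != 0 by rewrite gt_eqF // Spos //; lia.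
  rewrite Sstep; last lia. move=> h; field; exact: h.
have prodf : \prod_(1 <= i < K) f i = S t.
  rewrite [LHS](@big_cat_nat _ _ _ t 1 K) //=.
  have -> : \prod_(t <= i < K) f i = 1.
    by rewrite big_nat_cond big1 // => i /andP[/andP[it _] _]; rewrite /f ltnNge it.
  rewrite mulr1.
  have S1' : S 1%N = 1 by [].
  rewrite (@eq_big_nat _ _ _ _ _ _ (fun i => S i.+1 / S i)); last first.
    by move=> i /andP[_ it]; rewrite /f it.
  have [->|lt1] : (t = 1 \/ 1 < t)%N by lia.
    by rewrite big_geq // S1'.
  rewrite telescope_prodf // ?S1' ?divr1 // => k hk.
  by rewrite gt_eqF // Spos //; lia.
rewrite big_add1 /= in prodf; rewrite [RHS]big_add1 /= in lhs.
have H := @amgm K.-1 (fun i => f i.+1) ltac:(lia) (fun i hi => fge0 i.+1 ltac:(lia)).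
rewrite prodf in H.
rewrite -/(S _) in St.
have -> : \sum_(1 <= i < t) p i / \sum_(i <= j < K.+1) p j = \sum_(1 <= i < t) p i / S i by [].
rewrite lhs sumrB sumr_const_nat subn0 /gam.
set sf := \sum_(0 <= i < K.-1) f i.+1 in H *.
set q := r `^ _.
have n0 : (0 < K.-1)%N by lia.
have hn : 0 < K.-1%:R :> R by rewrite ltr0n.
have hq := @qprop r K.-1 r1 n0.
have sf0 : 0 <= sf by apply: sum_ge0_nat => i hi; apply: fge0; lia.
have : q <= sf / K.-1%:R.
  have [q0 q1] := andP hq.
  have m0 : 0 <= sf / K.-1%:R by rewrite divr_ge0 // ltW.
  rewrite -(ler_pXn2r n0) ?nnegrE ?(ltW q0) //.
  by rewrite qpow //; apply: le_trans St H.
rewrite ler_pdivlMr // => hq2.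
rewrite -mulr_natl mulr1 mulrBr mulr1 [_ * q]mulrC; lra.
Qed.

Lemma max_seq (s : seq nat) (P : pred nat) : has P s ->
  let m := \big[maxn/0%N]_(i <- s | P i) i in
  [/\ m \in s, P m & forall i, i \in s -> P i -> (i <= m)%N].
Proof.
elim: s => [//|a s IH] /=; rewrite big_cons.
case Pa: (P a) => /=.
  case hs: (has P s).
    have [m1 m2 m3] := IH hs.
    rewrite /maxn; case: ltnP => h; split => //.
    - by rewrite inE m1 orbT.
    - move=> i; rewrite inE => /orP[/eqP -> _|iS Pi]; first exact: ltnW.
      exact: m3.
    - by rewrite inE eqxx.
    - move=> i; rewrite inE => /orP[/eqP -> _ //|iS Pi].
      exact: leq_trans (m3 i iS Pi) h.
  have -> : \big[maxn/0%N]_(j <- s | P j) j = 0%N.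
    rewrite big_seq_cond big1 // => j /andP[js Pj].
    by move/hasP: hs => []; exists j.
  split; first by rewrite maxn0 inE eqxx.
  - by rewrite maxn0.
  - move=> i; rewrite inE maxn0 => /orP[/eqP -> //|iS Pi].
    by move/hasP: hs => []; exists i.
move=> hs; have [m1 m2 m3] := IH hs; split => //; first by rewrite inE m1 orbT.
by move=> i; rewrite inE => /orP[/eqP ->|iS Pi]; [rewrite Pa | exact: m3].
Qed.

Lemma argmax_ex (f : nat -> R) (s : seq nat) : s != [::] ->
  exists2 i, i \in s & all (fun k => f k <= f i) s.
Proof.
elim: s => [//|a s IH] _.
case: s IH => [|b s] IH.
  by exists a; rewrite ?inE //= lexx.
have [i1 i1s hall] := IH isT.
case: (leP (f i1) (f a)) => h.
  exists a; first by rewrite inE eqxx.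
  apply/allP => k; rewrite inE => /orP[/eqP -> | ks]; first exact: lexx.
  exact: le_trans (allP hall k ks) h.
exists i1; first by rewrite inE i1s orbT.
apply/allP => k; rewrite inE => /orP[/eqP -> | ks]; first exact: ltW.
exact: (allP hall k ks).
Qed.

Lemma t_opt_spec K (x p : nat -> R) : (1 <= K)%N ->
  let t := t_opt K x p in
  [/\ (1 <= t <= K)%N,
      (forall k, (1 <= k <= K)%N -> revenue K x p k <= revenue K x p t) &
      (forall i, (1 <= i <= K)%N ->
         (forall k, (1 <= k <= K)%N -> revenue K x p k <= revenue K x p i) -> (i <= t)%N)].
Proof.
move=> K1 t.
set P := fun i => all (fun k => revenue K x p k <= revenue K x p i) (iota 1 K).
have hiota : index_iota 1 K.+1 = iota 1 K by rewrite /index_iota subn1.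
have hP : has P (index_iota 1 K.+1).
  rewrite hiota.
  have [i iS hi] := @argmax_ex (revenue K x p) (iota 1 K) ltac:(by rewrite -size_eq0 size_iota -lt0n).
  by apply/hasP; exists i.
have [m1 m2 m3] := @max_seq _ _ hP.
change t with (\big[maxn/0%N]_(i <- index_iota 1 K.+1 | P i) i).
move: m1 m2 m3; set M := \big[maxn/0%N]_(i <- _ | _) _ => m1 m2 m3.
have mem k : (k \in iota 1 K) = (1 <= k <= K)%N by rewrite mem_iota addnC addn1 ltnS.
split.
- by move: m1; rewrite hiota mem.
- by move=> k hk; move/allP: m2 => /(_ k); rewrite mem => /(_ hk).
- move=> i hi hall; apply: m3; first by rewrite hiota mem.
  by apply/allP => k; rewrite mem => /hall.
Qed.


Lemma frac_le (A B g : R) : 0 <= A -> 0 < B -> 0 <= g -> A <= g * B ->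
  A / (A + B) <= g / (1 + g).
Proof.
move=> A0 B0 g0 h.
rewrite ler_pdivrMr; last lra.
rewrite mulrAC ler_pdivlMr; last lra.
nra.
Qed.

Lemma frac_mono (a b : R) : 0 <= a -> a <= b -> a / (1 + a) <= b / (1 + b).
Proof.
move=> a0 ab.
rewrite ler_pdivrMr; last lra.
rewrite mulrAC ler_pdivlMr; last lra.
nra.
Qed.

Lemma eta_ub (r : R) K (x p : nat -> R) : 1 < r -> (2 <= K)%N ->
  values_ok r K x -> prob_vec K p -> ELR1 K x p <= gam r K / (1 + gam r K).
Proof.
move=> r1 K2 [x1 [xinc xK]] [pp S1].
have [/andP[t1 tK] trev tmax] := @t_opt_spec K x p ltac:(lia).
rewrite /ELR1; set t := t_opt K x p in t1 tK trev tmax *.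
set Sm := fun i => \sum_(i <= j < K.+1) p j.
have xmono d i : (1 <= i)%N -> (i + d <= K)%N -> x i <= x (i + d)%N.
  elim: d => [|d IH] hi hd; first by rewrite addn0.
  apply: le_trans (IH hi ltac:(lia)) _; rewrite addnS; apply/ltW/xinc; lia.
have xle i j : (1 <= i <= j)%N -> (j <= K)%N -> x i <= x j.
  move=> /andP[hi hij] hj; have := xmono (j - i)%N i hi; rewrite subnKC //; apply; lia.
have xpos i : (1 <= i <= K)%N -> 0 < x i.
  move=> /andP[hi hk]; apply: lt_le_trans x1 (xle _ _ _ _); lia.
have Sstep i : (i <= K)%N -> Sm i = p i + Sm i.+1 by move=> iK; rewrite /Sm big_ltn.
have Spos i : (1 <= i <= K)%N -> 0 < Sm i.
  move=> /andP[i1 iK]; rewrite Sstep //.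
  have : 0 <= Sm i.+1 by apply: sum_ge0_nat => j /andP[h1 h2]; apply/ltW/pp; lia.
  have := pp i; rewrite i1 iK => /(_ isT); lra.
set Rv := revenue K x p t.
have RvE : Rv = x t * Sm t by [].
have Rv0 : 0 < Rv by rewrite RvE mulr_gt0 // ?xpos ?Spos // t1 tK.
set g := \sum_(1 <= i < t) p i / Sm i.
have g0 : 0 <= g.
  apply: sum_ge0_nat => i hi; apply: divr_ge0; first by apply/ltW/pp; lia.
  by apply/ltW/Spos; lia.
have hSt : r^-1 <= Sm t.
  have h1 : x 1%N <= Rv.
    have := trev 1%N ltac:(lia); rewrite /revenue -/(Sm 1%N).
    by have -> : Sm 1%N = 1 by []; rewrite mulr1.
  have h2 : x t <= r * Rv.
    apply: le_trans (xle t K _ _) _; [lia|lia|].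
    apply: le_trans xK _; apply: ler_wpM2l h1; lra.
  have xt := xpos t ltac:(lia).
  rewrite RvE mulrCA in h2.
  have h3 : 1 <= r * Sm t.
    by rewrite -(ler_pM2l xt) mulr1.
  have r0 : 0 < r by lra.
  by rewrite -[r^-1]mulr1 -(mulKf (lt0r_neq0 r0) (Sm t)) ler_wpM2l // invr_ge0 ltW.
have gle : g <= gam r K.
  by apply: core => //; rewrite ?t1 ?tK.
set A := \sum_(1 <= i < t) p i * x i.
set B := \sum_(t <= i < K.+1) p i * x i.
have AB : \sum_(1 <= i < K.+1) p i * x i = A + B by rewrite (@big_cat_nat _ _ _ t) //; lia.
have A0 : 0 <= A.
  apply: sum_ge0_nat => i hi; apply: mulr_ge0; [apply/ltW/pp|apply/ltW/xpos]; lia.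
have hA : A <= g * Rv.
  rewrite /g mulr_suml; apply: ler_sum_nat => i hi.
  have hr := trev i ltac:(lia); rewrite /revenue -/(Sm i) -/Rv in hr.
  have si := Spos i ltac:(lia); have pi := pp i ltac:(lia).
  have -> : p i * x i = p i / Sm i * (x i * Sm i).
    by field; apply: lt0r_neq0.
  by apply: ler_wpM2l => //; apply: divr_ge0; apply: ltW.
have hB : Rv <= B.
  rewrite RvE /Sm big_distrr /=; apply: ler_sum_nat => i hi.
  rewrite mulrC; apply: ler_wpM2l; [apply/ltW/pp|apply: xle]; lia.
rewrite AB.
have B0 : 0 < B by lra.
have hf : A / (A + B) <= g / (1 + g).
  apply: frac_le => //; apply: le_trans hA _; exact: ler_wpM2l.
exact: le_trans hf (@frac_mono g (gam r K) g0 gle).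
Qed.


Section Constr.
Variables (r : R) (K : nat).
Hypotheses (r1 : 1 < r) (K2 : (2 <= K)%N).
Let q := r `^ (- ((K.-1)%:R)^-1).
Let n0 : (0 < K.-1)%N. Proof. lia. Qed.
Let hq : 0 < q < 1. Proof. exact: qprop. Qed.
Let qK : q ^+ K.-1 = r^-1. Proof. exact: qpow. Qed.

Definition pc (i : nat) : R := if (i < K)%N then q ^+ i.-1 * (1 - q) else q ^+ K.-1.
Definition xc (i : nat) : R := (q ^+ i.-1)^-1.

Lemma Sc i : (1 <= i <= K)%N -> \sum_(i <= j < K.+1) pc j = q ^+ i.-1.
Proof.
move=> /andP[i1 iK].
rewrite big_nat_recr //= {2}/pc ltnn.
rewrite (@telescope_sumr_eq _ _ _ (fun j => - q ^+ j.-1)) //.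
  by ring.
move=> k /andP[ik kK]; rewrite /pc kK /=.
have -> : k = k.-1.+1 by lia.
rewrite /= exprS; ring.
Qed.

Lemma pc_prob : prob_vec K pc.
Proof.
have [q0 q1] := andP hq.
split.
  move=> i /andP[i1 iK]; rewrite /pc; case: ifP => _.
    by rewrite mulr_gt0 ?exprn_gt0 // subr_gt0.
  exact: exprn_gt0.
by rewrite Sc ?expr0 //; lia.
Qed.

Lemma pcK : pc K = r^-1.
Proof. by rewrite /pc ltnn qK. Qed.

Lemma gam_in : gamma_set r K (gam r K).
Proof.
exists pc; split; first exact: pc_prob.
split; first exact: pcK.
have [q0 q1] := andP hq.
rewrite (@eq_big_nat _ _ _ _ _ _ (fun _ => 1 - q)); last first.
  move=> i /andP[i1 iK]; rewrite Sc; last lia.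
  rewrite /pc iK mulrC mulKf // expf_neq0 // gt_eqF //.
by rewrite sumr_const_nat subn1 -mulr_natl.
Qed.

Lemma xc_ok : values_ok r K xc.
Proof.
have [q0 q1] := andP hq.
split; first by rewrite /xc expr0 invr1.
split.
  move=> i /andP[i1 iK]; rewrite /xc.
  rewrite ltf_pV2 ?posrE ?exprn_gt0 //.
  have -> : i.+1.-1 = i.-1.+1 by lia.
  by rewrite exprS gtr_pMl ?exprn_gt0.
rewrite /xc qK invrK /= expr0 invr1 mulr1 //.
Qed.

Lemma eta_in : eta_set r K (gam r K / (1 + gam r K)).
Proof.
have [q0 q1] := andP hq.
exists xc, pc; split; first exact: xc_ok.
split; first exact: pc_prob.
have rev1 k : (1 <= k <= K)%N -> revenue K xc pc k = 1.
  move=> hk; rewrite /revenue Sc // /xc mulVf // expf_neq0 // gt_eqF //.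
have tK : t_opt K xc pc = K.
  have [/andP[t1 tK] trev tmax] := @t_opt_spec K xc pc ltac:(lia).
  apply/eqP; rewrite eqn_leq tK /=; apply: tmax; first lia.
  by move=> k hk; rewrite !rev1 //; lia.
have pxE i : (1 <= i < K)%N -> pc i * xc i = 1 - q.
  move=> /andP[i1 iK]; rewrite /pc /xc iK mulrAC mulfV ?mul1r // expf_neq0 // gt_eqF //.
have num : \sum_(1 <= i < K) pc i * xc i = gam r K.
  rewrite (eq_big_nat _ _ pxE) sumr_const_nat subn1 -mulr_natl //.
rewrite /ELR1 tK num big_nat_recr /=; last lia.
rewrite num /pc ltnn /xc qK mulfV; last by rewrite invr_eq0 gt_eqF // (lt_trans ltr01 r1).
by rewrite addrC.
Qed.

End Constr.

End H.

Local Open Scope classical_set_scope.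
Local Open Scope ring_scope.

Theorem proposition7 (R : realType) (r : R) (K : nat) (hr : 1 < r) (hK : (2 <= K)%N) :
  is_sup (gamma_set r K) ((K.-1)%:R * (1 - r `^ (- ((K.-1)%:R)^-1))) /\
  is_sup (eta_set r K)
    ((K.-1)%:R * (1 - r `^ (- ((K.-1)%:R)^-1)) /
     (1 + (K.-1)%:R * (1 - r `^ (- ((K.-1)%:R)^-1)))).
Proof.
change ((K.-1)%:R * (1 - r `^ (- ((K.-1)%:R)^-1))) with (gam R r K).
split; split.
- move=> g [p [[pp S1] [pK ->]]].
  apply: core => //; first by rewrite leqnn andbT; lia.
  by rewrite big_nat1 pK.
- by move=> u ub; apply: ub; exact: gam_in.
- by move=> e [x [p [xo [pv ->]]]]; exact: eta_ub.
- by move=> u ub; apply: ub; exact: eta_in.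
Qed.
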